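(* Let $s\ge 0$ and $n\ge 0$. The $R/\mathfrak{h}_s$-module $\mathcal{P}_{s,n}$ admits a filtration by $R/\mathfrak{h}_s$-submodules $0=F_0\subset F_1\subset\cdots\subset F_{(s+1)^n}=\mathcal{P}_{s,n}$ such that $F_i/F_{i-1}\cong \mathcal{Q}_{s,n}$ for each $1\le i\le (s+1)^n$.
   Context: Let $k$ be a field. Let $\mathfrak{S}=\bigcup_{n\ge1}\mathfrak{S}_n$ be the group of finitary permutations of $\{1,2,\dots\}$ and $\mathfrak{S}(n)$ the subgroup fixing $1,\dots,n$; a representation of $\mathfrak{S}$ is smooth if every vector is fixed by some $\mathfrak{S}(n)$. Let $R=k[x_1,x_2,\dots]$ with $\mathfrak{S}$ permuting the variables, and $\mathfrak{h}_s$ the ideal generated by all $x_i^{s+1}$. An $R/\mathfrak{h}_s$-module means a module over $R/\mathfrak{h}_s$ equipped with a smooth $\mathfrak{S}$-action compatible with the action on $R/\mathfrak{h}_s$ ($\sigma(am)=\sigma(a)\sigma(m)$); submodules and isomorphisms are required to be $\mathfrak{S}$-equivariant. $\mathcal{P}_{s,n}$ is the free $R/\mathfrak{h}_s$-module with basis $e_{i_1,\dots,i_n}$ indexed by $n$-tuples of distinct positive integers, with $\sigma e_{i_1,\dots,i_n}=e_{\sigma(i_1),\dots,\sigma(i_n)}$. $\mathcal{Q}_{s,n}$ is the quotient of $\mathcal{P}_{s,n}$ by the submodule generated by all $x_i e_{i_1,\dots,i_n}$ with $i\in\{i_1,\dots,i_n\}$. *)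

(* Defs.v *)
From mathcomp Require Import all_boot all_algebra.
From Stdlib Require Import ClassicalEpsilon.
Set Implicit Arguments.
Unset Strict Implicit.
Unset Printing Implicit Defensive.
Import GRing.Theory.
Local Open Scope ring_scope.

(* Variables are x_0, x_1, ... (0-based relabelling of x_1, x_2, ...).
   A monomial is an exponent function nat -> nat. *)
Definition mono := nat -> nat.
Definition mono0 : mono := fun _ => 0%N.

(* A monomial is nonzero in R/h_s iff all exponents are <= s
   (and it has finite support). *)
Definition valid_mono (s : nat) (m : mono) : Prop :=
  (forall i, (m i <= s)%N) /\ exists N, forall i, (N <= i)%N -> m i = 0%N.

Definition valid_tuple (n : nat) (I : seq nat) : Prop := size I = n /\ uniq I.

(* Coefficient vectors w.r.t. the k-basis x^m e_I of P_{s,n}. *)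
Definition elt (k : fieldType) := mono -> seq nat -> k.

Definition isP (k : fieldType) (s n : nat) (f : elt k) : Prop :=
  (forall m I, f m I <> 0 -> valid_mono s m /\ valid_tuple n I) /\
  exists l : list (mono * seq nat), forall m I, f m I <> 0 -> List.In (m, I) l.

Definition ezero (k : fieldType) : elt k := fun _ _ => 0.
Definition eadd (k : fieldType) (f g : elt k) : elt k := fun m I => f m I + g m I.
Definition esub (k : fieldType) (f g : elt k) : elt k := fun m I => f m I - g m I.
Definition escale (k : fieldType) (c : k) (f : elt k) : elt k := fun m I => c * f m I.

(* Multiplication by the variable x_i in R/h_s (x_i^{s+1} = 0). *)
Definition emulx (k : fieldType) (s i : nat) (f : elt k) : elt k :=
  fun m I => if (0 < m i <= s)%N
             then f (fun j => if j == i then (m j).-1 else m j) I else 0.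

Record finperm := FinPerm {
  pfun : nat -> nat;
  pinv : nat -> nat;
  pfunK : cancel pfun pinv;
  pinvK : cancel pinv pfun;
  pfin : exists N, forall i, (N <= i)%N -> pfun i = i }.

(* Action: sigma (x^m e_I) = x^{sigma m} e_{sigma I}. *)
Definition eact (k : fieldType) (sg : finperm) (f : elt k) : elt k :=
  fun m I => f (m \o pfun sg) (map (pinv sg) I).

Definition ebasis (k : fieldType) (I : seq nat) : elt k :=
  fun m J => if excluded_middle_informative (m = mono0 /\ J = I) then 1 else 0.

(* R/h_s-submodules of P_{s,n} (stable under the S-action). Closure under the
   ring R/h_s is expressed via its k-algebra generators x_i. *)
Definition is_submodule (k : fieldType) (s n : nat) (F : elt k -> Prop) : Prop :=
  (forall x, F x -> isP s n x) /\
  F (ezero k) /\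
  (forall x y, F x -> F y -> F (eadd x y)) /\
  (forall c x, F x -> F (escale c x)) /\
  (forall i x, F x -> F (emulx s i x)) /\
  (forall sg x, F x -> F (eact sg x)).

(* The submodule N of P_{s,n} generated by x_i e_I with i in I;
   Q_{s,n} := P_{s,n} / N. *)
Definition inN (k : fieldType) (s n : nat) (x : elt k) : Prop :=
  forall F : elt k -> Prop, is_submodule s n F ->
    (forall i I, valid_tuple n I -> i \in I -> F (emulx s i (ebasis k I))) ->
    F x.

(* G/H is isomorphic to Q_{s,n} = P_{s,n}/N as R/h_s-modules: there is a map
   phi from G to P_{s,n} (a set-theoretic lift of a map G -> P/N) which is
   k-linear, x_i-linear and S-equivariant modulo N, whose induced map
   G -> P/N is surjective with kernel exactly H. *)
Definition quot_iso_Q (k : fieldType) (s n : nat) (G H : elt k -> Prop) : Prop :=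
  exists phi : elt k -> elt k,
    (forall x, G x -> isP s n (phi x)) /\
    (forall x y, G x -> G y ->
       inN s n (esub (phi (eadd x y)) (eadd (phi x) (phi y)))) /\
    (forall c x, G x -> inN s n (esub (phi (escale c x)) (escale c (phi x)))) /\
    (forall i x, G x -> inN s n (esub (phi (emulx s i x)) (emulx s i (phi x)))) /\
    (forall sg x, G x -> inN s n (esub (phi (eact sg x)) (eact sg (phi x)))) /\
    (forall x, G x -> (inN s n (phi x) <-> H x)) /\
    (forall y, isP s n y -> exists x, G x /\ inN s n (esub (phi x) y)).

(* Main.v *)
Require Import Defs.
From mathcomp Require Import all_boot all_algebra.
From Stdlib Require Import Classical ClassicalEpsilon FunctionalExtensionality.
From mathcomp Require Import zify.
Set Implicit Arguments.
Unset Strict Implicit.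
Unset Printing Implicit Defensive.
Import GRing.Theory.

Section Main.
Variable k : fieldType.
Variables s n : nat.
Local Open Scope ring_scope.
Implicit Types (f g x y : elt k) (m : mono) (I : seq nat) (sg : finperm).

Definition dec (i : nat) (m : mono) : mono := fun j => if j == i then (m j).-1 else m j.
Definition inc (i : nat) (m : mono) : mono := fun j => if j == i then (m j).+1 else m j.

Lemma inc_dec i m : (0 < m i)%N -> inc i (dec i m) = m.
Proof.
move=> h; apply: functional_extensionality => j; rewrite /inc /dec.
by case: eqP => [->|]; rewrite ?eqxx // prednK.
Qed.

Lemma valid_undec i m : (m i <= s)%N -> valid_mono s (dec i m) -> valid_mono s m.
Proof.
move=> hi [h1 [N hN]]; split.
  by move=> j; case: (eqVneq j i) => [->//|ne]; have := h1 j; rewrite /dec (negbTE ne).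
exists (maxn N i.+1) => j; rewrite geq_max => /andP[a b].
have := hN j a; rewrite /dec; case: eqP => // e; subst j; by rewrite ltnn in b.
Qed.

Lemma isP_0 : isP s n (ezero k).
Proof. by split; [move=> m I; rewrite /ezero; case | exists nil => m I; rewrite /ezero]. Qed.

Lemma isP_add f g : isP s n f -> isP s n g -> isP s n (eadd f g).
Proof.
move=> [f1 [l1 hl1]] [g1 [l2 hl2]]; split.
  move=> m I; rewrite /eadd => h.
  case: (eqVneq (f m I) 0) => [e|e]; last by apply: f1; apply/eqP.
  by apply: g1; move: h; rewrite e add0r.
exists (l1 ++ l2) => m I; rewrite /eadd => h; apply: List.in_or_app.
case: (eqVneq (f m I) 0) => [e|e]; last by left; apply: hl1; apply/eqP.
by right; apply: hl2; move: h; rewrite e add0r.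
Qed.

Lemma isP_scale c f : isP s n f -> isP s n (escale c f).
Proof.
move=> [f1 [l hl]]; split.
  by move=> m I; rewrite /escale => h; apply: f1 => e; apply: h; rewrite e mulr0.
by exists l => m I; rewrite /escale => h; apply: hl => e; apply: h; rewrite e mulr0.
Qed.

Lemma isP_opp f : isP s n f -> isP s n (escale (-1) f).
Proof. exact: isP_scale. Qed.

Lemma isP_sub f g : isP s n f -> isP s n g -> isP s n (esub f g).
Proof.
move=> hf hg; have := isP_add hf (isP_scale (-1) hg).
have -> : eadd f (escale (-1) g) = esub f g.
  by apply: functional_extensionality => m; apply: functional_extensionality => I;
     rewrite /eadd /escale /esub mulN1r.
by [].
Qed.

Lemma isP_mulx i f : isP s n f -> isP s n (emulx s i f).
Proof.
move=> [f1 [l hl]]; split.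
  move=> m I; rewrite /emulx; case: ifP => // /andP[a b] h.
  have [v t] := f1 _ _ h; split => //; exact: valid_undec b v.
exists (List.map (fun p => (inc i p.1, p.2)) l) => m I; rewrite /emulx.
case: ifP => // /andP[a b] h; have := List.in_map (fun p => (inc i p.1, p.2)) _ _ (hl _ _ h).
by rewrite /= -/(dec i m) inc_dec.
Qed.

Lemma pinv_fix (sg : finperm) j : pfun sg j = j -> pinv sg j = j.
Proof. by move=> e; rewrite -{1}e pfunK. Qed.

Lemma map_pfun_pinv (sg : finperm) I : map (pfun sg) (map (pinv sg) I) = I.
Proof. by rewrite -map_comp map_id_in // => x _ /=; rewrite pinvK. Qed.

Lemma isP_act sg f : isP s n f -> isP s n (eact sg f).
Proof.
move=> [f1 [l hl]]; split.
  move=> m I; rewrite /eact => h; have [[v1 [N hN]] [t1 t2]] := f1 _ _ h; split.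
    split.
      by move=> j; have := v1 (pinv sg j); rewrite /= pinvK.
    have [M hM] := pfin sg; exists (maxn N M) => j; rewrite geq_max => /andP[a b].
    have := hN j a; rewrite /= hM //.
  split; first by rewrite -t1 size_map.
  by rewrite (map_inj_uniq (can_inj (pinvK sg))) in t2.
exists (List.map (fun p => (p.1 \o pinv sg, map (pfun sg) p.2)) l) => m I; rewrite /eact => h.
have := List.in_map (fun p => (p.1 \o pinv sg, map (pfun sg) p.2)) _ _ (hl _ _ h).
rewrite /= map_pfun_pinv.
have -> // : (m \o pfun sg) \o pinv sg = m.
by apply: functional_extensionality => j /=; rewrite pinvK.
Qed.

Lemma supp_sub (Q : mono -> seq nat -> Prop) :
  (forall i m I, (0 < m i)%N -> Q (dec i m) I -> Q m I) ->
  (forall sg m I, Q (m \o pfun sg) (map (pinv sg) I) -> Q m I) ->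
  is_submodule s n (fun f => isP s n f /\ forall m I, f m I <> 0 -> Q m I).
Proof.
move=> hQ1 hQ2; split; first by move=> x [].
split; first by split; [exact: isP_0 | move=> m I; rewrite /ezero].
split.
  move=> x y [px hx] [py hy]; split; first exact: isP_add.
  move=> m I; rewrite /eadd => h.
  case: (eqVneq (x m I) 0) => [e|e]; last by apply: hx; apply/eqP.
  by apply: hy; move: h; rewrite e add0r.
split.
  move=> c x [px hx]; split; first exact: isP_scale.
  by move=> m I; rewrite /escale => h; apply: hx => e; apply: h; rewrite e mulr0.
split.
  move=> i x [px hx]; split; first exact: isP_mulx.
  move=> m I; rewrite /emulx; case: ifP => // /andP[a b] h.
  by apply: hQ1 a _; apply: hx.
move=> sg x [px hx]; split; first exact: isP_act.
by move=> m I; rewrite /eact => h; apply: (hQ2 sg); apply: hx.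
Qed.


Fixpoint code (m : mono) (I : seq nat) : nat :=
  match I with [::] => 0%N | j :: I' => (m j + s.+1 * code m I')%N end.
Fixpoint lift (c : nat) (I : seq nat) : mono :=
  match I with [::] => mono0
  | j :: I' => fun t : nat => if t == j then (c %% s.+1)%N else lift (c %/ s.+1) I' t end.
Definition zeroOn m I := all (fun j => m j == 0%N) I.
Definition restr m I : mono := fun j => if j \in I then 0%N else m j.
Definition madd (m1 m2 : mono) : mono := fun j => (m1 j + m2 j)%N.

Lemma code_eq m1 m2 I : (forall j, j \in I -> m1 j = m2 j) -> code m1 I = code m2 I.
Proof.
elim: I => //= j I IH h; rewrite h ?mem_head // IH // => x xI; apply: h.
by rewrite inE xI orbT.
Qed.

Lemma lift_notin c I j : j \notin I -> lift c I j = 0%N.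
Proof.
elim: I c => //= a I IH c; rewrite inE negb_or => /andP[ne nI].
by rewrite (negbTE ne) IH.
Qed.

Lemma lift_le c I j : (lift c I j <= s)%N.
Proof.
elim: I c => //= a I IH c; case: ifP => _ //.
by rewrite -ltnS ltn_mod.
Qed.

Lemma code_lift c I : uniq I -> (c < s.+1 ^ size I)%N -> code (lift c I) I = c.
Proof.
elim: I c => [|a I IH] c /=; first by rewrite expn0 ltnS leqn0 => _ /eqP.
move=> /andP[aI uI] hc; rewrite eqxx.
rewrite (@code_eq _ (lift (c %/ s.+1) I)); last first.
  by move=> j jI; case: eqP => // e; subst j; rewrite jI in aI.
rewrite IH //; first by rewrite mulnC addnC -divn_eq.
by rewrite ltn_divLR // -expnSr.
Qed.

Lemma code_lt m I : (forall j, m j <= s)%N -> (code m I < s.+1 ^ size I)%N.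
Proof.
move=> hm; elim: I => [|a I IH] /=; first by rewrite expn0.
rewrite expnS; have := hm a; move: (code m I) IH => c; move: (s.+1 ^ size I)%N => P.
move=> h1 h2; nia.
Qed.

Lemma code_decode m I : uniq I -> (forall j, m j <= s)%N ->
  forall j, j \in I -> m j = lift (code m I) I j.
Proof.
move=> + hm; elim: I => //= a I IH /andP[aI uI] j; rewrite inE.
have e1 : ((m a + s.+1 * code m I) %% s.+1 = m a)%N.
  by rewrite addnC mulnC modnMDl modn_small // ltnS.
have e2 : ((m a + s.+1 * code m I) %/ s.+1 = code m I)%N.
  by rewrite mulnC divnDMl // divn_small ?add0n // ltnS.
case: eqP => [-> _|ne /= jI]; first by rewrite e1.
by rewrite e2; apply: IH.
Qed.

Lemma code_mono m1 m2 I : (forall j, m1 j <= m2 j)%N -> (code m1 I <= code m2 I)%N.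
Proof.
move=> h; elim: I => //= a I IH.
by apply: leq_add => //; rewrite leq_mul2l IH orbT.
Qed.

Lemma code_dec_lt i m I : i \in I -> (0 < m i)%N -> (code (dec i m) I < code m I)%N.
Proof.
move=> iI hi.
have hle : forall j, (dec i m j <= m j)%N.
  by move=> j; rewrite /dec; case: eqP => // _; apply: leq_pred.
elim: I iI => //= a I IH; rewrite inE; case: (eqVneq i a) => [<- _|ne /= iI].
  rewrite {1}/dec eqxx; have := @code_mono _ _ I hle.
  move: (code (dec i m) I) (code m I) => X Y; nia.
have := IH iI; have := hle a.
move: (code (dec i m) I) (code m I) => X Y; nia.
Qed.

Lemma lift_act sg c I : lift c (map (pinv sg) I) = lift c I \o pfun sg.
Proof.
apply: functional_extensionality => t; elim: I c => //= a I IH c.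
rewrite IH; congr (if _ then _ else _).
apply/eqP/eqP => [->|<-]; by rewrite ?pinvK ?pfunK.
Qed.

Lemma code_act sg m I : code (m \o pfun sg) (map (pinv sg) I) = code m I.
Proof. by elim: I => //= a I ->; rewrite pinvK. Qed.

Lemma zeroOn_act sg m I : zeroOn (m \o pfun sg) (map (pinv sg) I) = zeroOn m I.
Proof. by rewrite /zeroOn all_map; apply: eq_all => j /=; rewrite pinvK. Qed.

Lemma zeroOnP m I : reflect (forall j, j \in I -> m j = 0%N) (zeroOn m I).
Proof. by apply: (iffP allP) => h j jI; [apply/eqP; apply: h | rewrite h]. Qed.

Lemma restr_lift m I : uniq I -> (forall j, m j <= s)%N ->
  madd (restr m I) (lift (code m I) I) = m.
Proof.
move=> uI hm; apply: functional_extensionality => j; rewrite /madd /restr.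
case: ifP => jI; first by rewrite add0n -code_decode.
by rewrite lift_notin ?jI // addn0.
Qed.

Definition single (p : mono * seq nat) (c : k) : elt k :=
  fun m J => if excluded_middle_informative (m = p.1 /\ J = p.2) then c else 0.

Lemma dec_inc0 j : dec j (inc j mono0) = mono0.
Proof.
apply: functional_extensionality => t; rewrite /dec /inc.
by case: eqP.
Qed.

Lemma dec_inc j m : dec j (inc j m) = m.
Proof.
apply: functional_extensionality => t; rewrite /dec /inc.
by case: eqP => // ->.
Qed.

Lemma single_mulx j m I : (0 < m j <= s)%N ->
  single (m, I) 1 = emulx s j (single (dec j m, I) 1).
Proof.
move=> h; apply: functional_extensionality => m0; apply: functional_extensionality => J.
rewrite /single /emulx /=.
case: excluded_middle_informative => [[e1 e2]|ne].
  subst; rewrite h; case: excluded_middle_informative => // [[]]; tauto.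
case: ifP => // h0; case: excluded_middle_informative => // [[e1 e2]].
exfalso; apply: ne; split => //.
have e1' : dec j m0 = dec j m := e1. move/andP: h0 => [h0 _]; rewrite -(inc_dec h0) e1' inc_dec //; by case/andP: h.
Qed.

Definition deg (N : nat) m := (\sum_(i < N) m i)%N.

Lemma deg_dec N j m : (j < N)%N -> (0 < m j)%N -> deg N m = (deg N (dec j m)).+1.
Proof.
move=> jN hj; rewrite /deg (bigD1 (Ordinal jN)) //= [in RHS](bigD1 (Ordinal jN)) //=.
rewrite /dec eqxx -addSn prednK //; congr (_ + _)%N.
apply: eq_bigr => i ne; case: eqP => // e; exfalso; move/eqP: ne; apply.
by apply: val_inj.
Qed.

Lemma deg0 N m : deg N m = 0%N -> forall j, (j < N)%N -> m j = 0%N.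
Proof.
move=> /eqP; rewrite /deg sum_nat_eq0 => /forallP h j jN.
by have /implyP/(_ isT)/eqP := h (Ordinal jN).
Qed.

Lemma madd_dec j m1 m2 : (0 < m1 j)%N -> madd (dec j m1) m2 = dec j (madd m1 m2).
Proof.
move=> h; apply: functional_extensionality => t; rewrite /madd /dec.
case: eqP => // ->; by rewrite -subn1 addnBAC // subn1.
Qed.

Lemma madd0 m : madd mono0 m = m.
Proof. by []. Qed.

Section Gen.
Variable F : elt k -> Prop.
Hypothesis subF : is_submodule s n F.
Hypothesis genF : forall i I, valid_tuple n I -> i \in I -> F (emulx s i (ebasis k I)).

Lemma F_single_aux I j0 N : valid_tuple n I -> j0 \in I -> forall d m',
  deg N m' = d -> (forall j, (N <= j)%N -> m' j = 0%N) ->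
  (forall j, madd m' (inc j0 mono0) j <= s)%N ->
  F (single (madd m' (inc j0 mono0), I) 1).
Proof.
move=> vI jI; have [_ [_ [_ [_ [Fmul _]]]]] := subF.
elim=> [|d IH] m' hd hN hs.
  have -> : m' = mono0.
    apply: functional_extensionality => j; case: (ltnP j N) => jN.
      exact: deg0 hd _ jN.
    exact: hN.
  rewrite madd0 (@single_mulx j0); last first.
    by have := hs j0; rewrite /madd /inc eqxx /= => h; apply: leq_trans h; rewrite addn1.
  by rewrite dec_inc0; apply: genF.
have [j [jN hj]] : exists j, (j < N)%N /\ (0 < m' j)%N.
  apply: NNPP => hne; move: hd; suff -> : deg N m' = 0%N by [].
  apply/eqP; rewrite /deg sum_nat_eq0; apply/forallP => t; apply/implyP => _.
  rewrite eqn0Ngt; apply/negP => ht; apply: hne; exists (val t); split => //; exact: ltn_ord.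
rewrite (@single_mulx j); last first.
  rewrite hs andbT /madd; exact: leq_trans hj (leq_addr _ _).
rewrite -madd_dec //; apply: Fmul; apply: IH.
- by move: hd; rewrite (deg_dec jN hj) => -[].
- by move=> t tN; rewrite /dec hN //; case: eqP.
- by move=> t; rewrite madd_dec //; apply: leq_trans (hs t); rewrite /dec; case: eqP => // _; apply: leq_pred.
Qed.

Lemma F_single m I c : valid_mono s m -> valid_tuple n I -> ~~ zeroOn m I ->
  F (single (m, I) c).
Proof.
move=> [ms [N hN]] vI /zeroOnP nz.
have [j0 [jI hj]] : exists j0, j0 \in I /\ (0 < m j0)%N.
  apply: NNPP => h; apply: nz => j jI; apply/eqP; rewrite eqn0Ngt; apply/negP => hj.
  by apply: h; exists j.
have [_ [_ [_ [Fsc _]]]] := subF.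
have -> : single (m, I) c = escale c (single (m, I) 1).
  apply: functional_extensionality => m0; apply: functional_extensionality => J.
  rewrite /escale /single; by case: excluded_middle_informative => h; rewrite ?mulr1 ?mulr0.
apply: Fsc.
have e : madd (dec j0 m) (inc j0 mono0) = m.
  apply: functional_extensionality => t; rewrite /madd /dec /inc /mono0.
  by case: eqP => [->|]; rewrite ?addn0 // addn1 prednK.
rewrite -e; apply: (@F_single_aux I j0 N vI jI _ _ erefl).
  by move=> t tN; rewrite /dec hN //; case: eqP.
by rewrite e.
Qed.

Lemma F_Z x : isP s n x -> (forall m I, zeroOn m I -> x m I = 0) -> F x.
Proof.
move=> [px [l hl]] hz; have [_ [F0 [Fadd [Fsc _]]]] := subF.
elim: l x px hl hz => [|p l IH] x px hl hz.
  have -> : x = ezero k; last by [].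
  apply: functional_extensionality => m; apply: functional_extensionality => I.
  by apply: NNPP => h; apply: (hl m I).
case: p hl => pm pI hl.
case: (eqVneq (x pm pI) 0) => [e|ne].
  apply: IH => // m I h; have := hl m I h; case => // -[e1 e2]; subst.
  by rewrite e in h.
have [vm vI] := px _ _ (elimN eqP ne).
have nz : ~~ zeroOn pm pI by apply/negP => z; move: ne; rewrite hz // eqxx.
set g := eadd x (escale (-1) (single (pm, pI) (x pm pI))).
have -> : x = eadd g (single (pm, pI) (x pm pI)).
  apply: functional_extensionality => m; apply: functional_extensionality => I.
  rewrite /g /eadd /escale; set c := single _ _ _ _; by rewrite mulN1r addrNK.
apply: Fadd; last exact: F_single.
have ps : isP s n (single (pm, pI) (x pm pI)).
  split.
    by move=> m I; rewrite /single; case: excluded_middle_informative => //= -[-> ->].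
  exists [:: (pm, pI)] => m I; rewrite /single; case: excluded_middle_informative => //= -[-> ->].
  by left.
apply: IH.
- have [] // : isP s n g; rewrite /g; apply: isP_add; [by split; [exact: px | exists ((pm, pI) :: l)] | exact: isP_scale].
- move=> m I; rewrite /g /eadd /escale /single /=.
  case: excluded_middle_informative => /= [[-> ->]|ne2].
    by rewrite mulN1r subrr.
  rewrite mulr0 addr0 => h; case: (hl m I h) => // -[e1 e2]; by subst; case: ne2.
- move=> m I z; rewrite /g /eadd /escale /single /= hz //.
  case: excluded_middle_informative => /= [[e1 e2]|_]; last by rewrite mulr0 addr0.
  by subst; rewrite z in nz.
Qed.

End Gen.

Lemma Z_inN x : isP s n x -> (forall m I, zeroOn m I -> x m I = 0) -> inN s n x.
Proof. by move=> px hz F subF genF; apply: F_Z. Qed.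

Lemma inN_supp x : inN s n x -> forall m I, x m I <> 0 -> ~~ zeroOn m I.
Proof.
move=> h; suff : isP s n x /\ (forall m I, x m I <> 0 -> ~~ zeroOn m I) by case.
apply: (h (fun f => isP s n f /\ (forall m I, f m I <> 0 -> ~~ zeroOn m I))).
  apply: (@supp_sub (fun m I => ~~ zeroOn m I)).
    move=> i m I hi; apply: contra => /zeroOnP z; apply/zeroOnP => j jI.
    by rewrite /dec z //; case: eqP.
  by move=> sg m I; rewrite zeroOn_act.
move=> i I vI iI; split.
  apply: isP_mulx; split.
    move=> m J; rewrite /ebasis; case: excluded_middle_informative => // -[e1 e2] _.
    subst; split => //; split; first by [].
    by exists 0%N.
  exists [:: (mono0, I)] => m J; rewrite /ebasis; case: excluded_middle_informative => // -[e1 e2] _; subst.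
  by left.
move=> m J; rewrite /emulx /ebasis; case: ifP => // /andP[a _].
case: excluded_middle_informative => // -[_ e2] _; subst.
by apply/zeroOnP => z; move: a; rewrite z.
Qed.

Definition Nn := (s.+1 ^ n)%N.
Definition Fil (i : nat) x := isP s n x /\ forall m I, x m I <> 0 -> (Nn - i <= code m I)%N.
Definition phi (c : nat) x : elt k :=
  fun m I => if zeroOn m I then x (madd m (lift c I)) I else 0.

Lemma Fil_sub i : is_submodule s n (Fil i).
Proof.
apply: (@supp_sub (fun m I => (Nn - i <= code m I)%N)).
  move=> j m I _ h; apply: leq_trans h _; apply: code_mono => t.
  by rewrite /dec; case: eqP => // _; apply: leq_pred.
by move=> sg m I; rewrite code_act.
Qed.

Lemma isP_code x m I : isP s n x -> x m I <> 0 -> (code m I < Nn)%N.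
Proof.
move=> [px _] h; have [[ms _] [sz _]] := px _ _ h.
by rewrite /Nn -sz; apply: code_lt.
Qed.

Lemma inN_zero (D : elt k) : (forall m I, D m I = 0) -> inN s n D.
Proof.
move=> h F [_ [F0 _]] _.
have -> // : D = ezero k.
by apply: functional_extensionality => m; apply: functional_extensionality => I; rewrite h.
Qed.

Lemma restr_madd m I c : zeroOn m I -> restr (madd m (lift c I)) I = m.
Proof.
move=> /zeroOnP z; apply: functional_extensionality => j; rewrite /restr /madd.
case: ifP => jI; first by rewrite z.
by rewrite lift_notin ?jI // addn0.
Qed.

Lemma isP_phi c x : isP s n x -> isP s n (phi c x).
Proof.
move=> [px [l hl]]; split.
  move=> m I; rewrite /phi; case: ifP => // z h.
  have [[ms [N hN]] vI] := px _ _ h; split => //; split.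
    by move=> j; apply: leq_trans (ms j); rewrite /madd leq_addr.
  by exists N => j jN; have := hN j jN; rewrite /madd => /eqP; rewrite addn_eq0 => /andP[/eqP].
exists (List.map (fun p => (restr p.1 p.2, p.2)) l) => m I; rewrite /phi; case: ifP => // z h.
have := List.in_map (fun p => (restr p.1 p.2, p.2)) _ _ (hl _ _ h).
by rewrite /= restr_madd.
Qed.

Lemma notin_bound I : exists B, forall j, (B <= j)%N -> j \notin I.
Proof.
elim: I => [|a I [B hB]]; first by exists 0%N.
exists (maxn B a.+1) => j; rewrite geq_max => /andP[h1 h2]; rewrite inE negb_or hB //.
by rewrite andbT; apply/eqP => e; subst; rewrite ltnn in h2.
Qed.

Section Iso.
Variable i : nat.
Hypothesis hi : (1 <= i <= Nn)%N.
Let c := (Nn - i)%N.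

Lemma c_lt : (c < Nn)%N.
Proof. by rewrite /c; move: hi; move: Nn => N; lia. Qed.

Lemma code_L m I : valid_tuple n I -> zeroOn m I -> code (madd m (lift c I)) I = c.
Proof.
move=> [sz uI] /zeroOnP z; rewrite (@code_eq _ (lift c I)).
  by rewrite code_lift // sz c_lt.
by move=> j jI; rewrite /madd z.
Qed.

Lemma phi_add x y : inN s n (esub (phi c (eadd x y)) (eadd (phi c x) (phi c y))).
Proof.
apply: inN_zero => m I; rewrite /esub /eadd /phi; case: ifP => _; last by rewrite addr0 subrr.
by rewrite subrr.
Qed.

Lemma phi_scale a x : inN s n (esub (phi c (escale a x)) (escale a (phi c x))).
Proof.
apply: inN_zero => m I; rewrite /esub /escale /phi; case: ifP => _; last by rewrite mulr0 subrr.
by rewrite subrr.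
Qed.

Lemma phi_act sg x : inN s n (esub (phi c (eact sg x)) (eact sg (phi c x))).
Proof.
apply: inN_zero => m I; rewrite /esub /eact /phi zeroOn_act lift_act.
by case: ifP => _; rewrite subrr.
Qed.

Lemma phi_mulx j x : Fil i x -> inN s n (esub (phi c (emulx s j x)) (emulx s j (phi c x))).
Proof.
move=> [px hx]; apply: Z_inN.
  by apply: isP_sub; [apply: isP_phi; apply: isP_mulx | apply: isP_mulx; apply: isP_phi].
move=> m I z; rewrite /esub /phi z /emulx.
case jI: (j \in I).
  have -> : m j = 0%N by move/zeroOnP: z; apply.
  rewrite /= subr0; case: ifP => // /andP[h1 h2].
  apply: NNPP => ne; have := hx _ _ ne; rewrite -/(dec j (madd m (lift c I))).
  have [_ vI] := (proj1 px) _ _ ne.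
  rewrite -/c; have := code_dec_lt jI h1; rewrite code_L //.
  by move=> a b; have := leq_trans a b; rewrite ltnn.
have e1 : madd m (lift c I) j = m j by rewrite /madd lift_notin ?jI // addn0.
rewrite e1; case: ifP => h; last by rewrite subrr.
have -> : zeroOn (fun t => if t == j then (m t).-1 else m t) I.
  apply/zeroOnP => t tI; move/zeroOnP: z => z; case: eqP => [e|_]; last exact: z.
  by subst; rewrite tI in jI.
rewrite -/(dec j m) madd_dec; last by case/andP: h.
by rewrite subrr.
Qed.

Lemma phi_ker x : Fil i x -> (inN s n (phi c x) <-> Fil i.-1 x).
Proof.
move=> [px hx]; split.
  move=> hN; split => // m I h.
  have [[ms _] vI] := (proj1 px) _ _ h.
  have h1 := hx _ _ h; rewrite -/c in h1.
  suff : code m I != c.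
    by move: h1 hi; rewrite /c; move: (code m I) Nn => X N; lia.
  apply/eqP => e.
  have H := @inN_supp _ hN (restr m I) I.
  have z : zeroOn (restr m I) I by apply/zeroOnP => j jI; rewrite /restr jI.
  suff hne : phi c x (restr m I) I <> 0 by move: (H hne); rewrite z.
  rewrite /phi z -e restr_lift //; by case: vI.
move=> [_ h1]; apply: inN_zero => m I; rewrite /phi; case: ifP => // z.
apply: NNPP => ne; have := h1 _ _ ne; have [_ vI] := (proj1 px) _ _ ne.
rewrite code_L //; rewrite /c; move: hi; move: Nn => N; lia.
Qed.

Lemma phi_surj y : isP s n y -> exists x, Fil i x /\ inN s n (esub (phi c x) y).
Proof.
move=> py.
pose x : elt k := fun m I =>
  if excluded_middle_informative (m = madd (restr m I) (lift c I)) then y (restr m I) I else 0.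
have px : isP s n x.
  case: py => [vy [l hl]]; split.
    move=> m I; rewrite /x; case: excluded_middle_informative => // e h.
    have [[ms [N hN]] vI] := vy _ _ h; split => //; rewrite e; split.
      move=> j; rewrite /madd /restr; case: ifP => jI; first by rewrite add0n lift_le.
      by have := ms j; rewrite /restr jI lift_notin ?jI // addn0.
    have [B hB] := notin_bound I; exists (maxn N B) => j; rewrite geq_max => /andP[a b].
    by rewrite /madd hN // lift_notin // hB.
  exists (List.map (fun p => (madd p.1 (lift c p.2), p.2)) l) => m I.
  rewrite /x; case: excluded_middle_informative => // e h.
  have := List.in_map (fun p => (madd p.1 (lift c p.2), p.2)) _ _ (hl _ _ h).
  by rewrite /= -e.
exists x; split.
  split => // m I h; have [_ vI] := (proj1 px) _ _ h.
  move: h; rewrite /x; case: excluded_middle_informative => // e _.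
  rewrite e -/c code_L //; apply/zeroOnP => j jI; by rewrite /restr jI.
apply: Z_inN; first by apply: isP_sub => //; apply: isP_phi.
move=> m I z; rewrite /esub /phi z /x restr_madd //.
move: (excluded_middle_informative _) => b; case: b => [e|ne]; first by rewrite /= subrr.
by case: ne.
Qed.

Lemma iso : quot_iso_Q s n (Fil i) (Fil i.-1).
Proof.
exists (phi c); split; first by move=> x [px _]; apply: isP_phi.
split; first by move=> *; apply: phi_add.
split; first by move=> *; apply: phi_scale.
split; first by move=> j x hx; apply: phi_mulx.
split; first by move=> *; apply: phi_act.
split; first by move=> x hx; apply: phi_ker.
exact: phi_surj.
Qed.

End Iso.

Lemma main : exists F : nat -> (elt k -> Prop),
    (forall i, is_submodule s n (F i)) /\
    (forall x, F 0%N x <-> x = ezero k) /\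
    (forall x, F ((s.+1) ^ n)%N x <-> isP s n x) /\
    (forall i x, (i < (s.+1) ^ n)%N -> F i x -> F i.+1 x) /\
    (forall i, (1 <= i <= (s.+1) ^ n)%N -> quot_iso_Q s n (F i) (F i.-1)).
Proof.
exists Fil; split; first exact: Fil_sub.
split.
  move=> x; split.
    move=> [px hx]; apply: functional_extensionality => m; apply: functional_extensionality => I.
    apply: NNPP => h; have := hx _ _ h; have := isP_code px h.
    by rewrite subn0 => a b; have := leq_trans a b; rewrite ltnn.
  by move=> ->; split; [exact: isP_0 | move=> m I; rewrite /ezero].
split.
  by move=> x; split; [case | move=> px; split => // m I _; rewrite /Nn subnn].
split.
  move=> i x _ [px hx]; split => // m I h; apply: leq_trans (hx _ _ h).
  by apply: leq_sub2l.
exact: iso.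
Qed.

End Main.

Theorem proposition4p9 (k : fieldType) (s n : nat) :
  exists F : nat -> (elt k -> Prop),
    (forall i, is_submodule s n (F i)) /\
    (forall x, F 0%N x <-> x = ezero k) /\
    (forall x, F ((s.+1) ^ n)%N x <-> isP s n x) /\
    (forall i x, (i < (s.+1) ^ n)%N -> F i x -> F i.+1 x) /\
    (forall i, (1 <= i <= (s.+1) ^ n)%N -> quot_iso_Q s n (F i) (F i.-1)).
Proof. exact: main. Qed.
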